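(* Let $(G=(V,E),\sigma)$ be a properly $n$-colored graph containing a hub-vertex $x$, and let $(H,\sigma'):=(G-x,\sigma|_{V\setminus\{x\}})$. Then $F$ is an optimal deletion set (resp. optimal edit set) for $(G,\sigma)$, i.e. an optimal set with $(G\setminus F,\sigma)$ (resp. $(G\triangle F,\sigma)$) an $n$-RBMG, if and only if $F$ is an optimal set such that $(H\setminus F,\sigma')$ (resp. $(H\triangle F,\sigma')$) is an $(n-1)$-RBMG.
   Context: All graphs are finite, simple and undirected; $G\setminus F=(V,E\setminus F)$, $G\triangle F=(V,E\triangle F)$; $G-x$ is obtained by deleting vertex $x$ and its incident edges. A vertex coloring is a surjective map $\sigma:V\to S$; properly $n$-colored means adjacent vertices get distinct colors and $|S|=n$. A hub-vertex is a vertex adjacent to all other vertices. A phylogenetic tree $T$ on $L$ is a rooted tree with leaf set $L$ whose inner vertices other than the root have degree at least three; $u\preceq_T v$ means $v$ lies on the root-to-$u$ path; $\mathrm{lca}_T$ is last common ancestor. For surjective $\sigma:L\to S$, $y$ is a best match of $x$ if $\sigma(x)\neq\sigma(y)$ and $\mathrm{lca}_T(x,y)\preceq_T\mathrm{lca}_T(x,y')$ for all $y'$ with $\sigma(y')=\sigma(y)$; $G(T,\sigma)$ is the graph on $L$ whose edges are the reciprocal best match pairs. A properly colored $(G,\sigma)$ is an RBMG if $G(T,\sigma)=(G,\sigma)$ for some $(T,\sigma)$; an $n$-RBMG if exactly $n$ colors are used. For a properly $m$-colored graph, a deletion set $F\subseteq E$ (resp. edit set $F\subseteq\binom{V}{2}$)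 is one making the graph an $m$-RBMG by deletion (resp. symmetric difference); it is optimal if of minimum cardinality among such sets. *)

(* Defs.v *)
From mathcomp Require Import all_boot.
Set Implicit Arguments. Unset Strict Implicit. Unset Printing Implicit Defensive.

Section Graphs.
Variables (V S : finType).

Definition pairs (U : {set V}) : {set {set V}} :=
  [set e : {set V} | (e \subset U) && (#|e| == 2)].

Definition wf_graph (U : {set V}) (E : {set {set V}}) : Prop := E \subset pairs U.

Definition adj (E : {set {set V}}) (a b : V) : bool := (a != b) && ([set a; b] \in E).

Definition del_vertex (U : {set V}) (E : {set {set V}}) (x : V) :=
  (U :\ x, [set e in E | x \notin e]).

Definition symdiff (E F : {set {set V}}) := (E :\: F) :|: (F :\: E).

Definition hub (U : {set V}) (E : {set {set V}}) (x : V) : Prop :=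
  x \in U /\ forall y, y \in U -> y != x -> adj E x y.

Definition ncolors (U : {set V}) (sigma : V -> S) : nat := #|sigma @: U|.

Definition proper (U : {set V}) (E : {set {set V}}) (sigma : V -> S) : Prop :=
  forall a b, a \in U -> b \in U -> adj E a b -> sigma a != sigma b.

Definition properly_colored (U : {set V}) (E : {set {set V}}) (sigma : V -> S) (n : nat) :=
  [/\ wf_graph U E, proper U E sigma & ncolors U sigma = n].
End Graphs.

Section Trees.
Variables (T : finType) (p : T -> T) (r : T).

Definition rooted_tree : Prop := p r = r /\ forall v, fconnect p v r.

Definition children (v : T) : {set T} := [set w | (w != r) && (p w == v)].

Definition is_leaf (v : T) : bool := children v == set0.

(* inner vertices other than the root have degree >= 3, i.e. >= 2 children *)
Definition phylo_tree : Prop :=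
  rooted_tree /\ forall v, v != r -> ~~ is_leaf v -> 2 <= #|children v|.

(* u <=_T v : v lies on the root-to-u path *)
Definition anc (u v : T) : bool := fconnect p u v.

Definition is_lca (a b z : T) : bool :=
  [&& anc a z, anc b z & [forall w, (anc a w && anc b w) ==> anc z w]].

Definition lca (a b : T) : T := odflt r [pick z | is_lca a b z].
End Trees.

Section RBMG.
Variables (V S : finType).

Definition best_match (U : {set V}) (sigma : V -> S) (T : finType) (p : T -> T) (r : T)
  (lf : V -> T) (x y : V) : Prop :=
  [/\ x \in U, y \in U, sigma x != sigma y &
      forall y', y' \in U -> sigma y' = sigma y ->
        anc p (lca p r (lf x) (lf y)) (lca p r (lf x) (lf y'))].

(* (T,sigma) with leaf set U (via the bijection lf : U -> leaves) explains (U,E) *)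
Definition explains (U : {set V}) (E : {set {set V}}) (sigma : V -> S)
  (T : finType) (p : T -> T) (r : T) (lf : V -> T) : Prop :=
  [/\ phylo_tree p r,
      {in U &, injective lf},
      (forall t, is_leaf p r t <-> exists2 a, a \in U & lf a = t) &
      (forall a b, a \in U -> b \in U ->
         (adj E a b <-> best_match U sigma p r lf a b /\ best_match U sigma p r lf b a))].

(* n-RBMG; the empty graph is regarded as (explained by the empty tree) *)
Definition nRBMG (U : {set V}) (E : {set {set V}}) (sigma : V -> S) (n : nat) : Prop :=
  properly_colored U E sigma n /\
  (U = set0 \/ exists (T : finType) (p : T -> T) (r : T) (lf : V -> T),
                 explains U E sigma p r lf).

Definition deletion_set (U : {set V}) (E : {set {set V}}) (sigma : V -> S) (m : nat) (F : {set {set V}}) : Prop :=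
  F \subset E /\ nRBMG U (E :\: F) sigma m.

Definition edit_set (U : {set V}) (E : {set {set V}}) (sigma : V -> S) (m : nat) (F : {set {set V}}) : Prop :=
  F \subset pairs U /\ nRBMG U (symdiff E F) sigma m.

Definition optimal_deletion_set (U : {set V}) (E : {set {set V}}) (sigma : V -> S) (m : nat) (F : {set {set V}}) : Prop :=
  deletion_set U E sigma m F /\
  forall F' : {set {set V}}, deletion_set U E sigma m F' -> #|F| <= #|F'|.

Definition optimal_edit_set (U : {set V}) (E : {set {set V}}) (sigma : V -> S) (m : nat) (F : {set {set V}}) : Prop :=
  edit_set U E sigma m F /\
  forall F' : {set {set V}}, edit_set U E sigma m F' -> #|F| <= #|F'|.
End RBMG.

(* Main.v *)
Require Import Defs.
From mathcomp Require Import all_boot.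
Set Implicit Arguments. Unset Strict Implicit. Unset Printing Implicit Defensive.

Section TreeLemmas.
Variables (T : finType) (p : T -> T) (r : T).
Hypothesis rt : rooted_tree p r.

Lemma pr_r : p r = r. Proof. by case: rt. Qed.

Lemma anc_iterP u v : anc p u v <-> exists n, iter n p u = v.
Proof.
split; first by move=> h; exists (findex p u v); exact: iter_findex.
by case=> n <-; exact: fconnect_iter.
Qed.

Lemma anc_refl u : anc p u u. Proof. exact: connect0. Qed.
Lemma anc_trans u v w : anc p u v -> anc p v w -> anc p u w.
Proof. exact: connect_trans. Qed.
Lemma anc_p u : anc p u (p u). Proof. exact: fconnect1. Qed.
Lemma anc_r u : anc p u r. Proof. by case: rt => _ /(_ u). Qed.

Lemma fix_root t : p t = t -> t = r.
Proof.
move=> h; have [n hn] := (anc_iterP t r).1 (anc_r t).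
by rewrite -hn iter_fix.
Qed.

Lemma iter_mul N k u : iter N p u = u -> iter (N * k) p u = u.
Proof.
move=> h; elim: k => [|k IH]; first by rewrite muln0.
by rewrite mulnS iterD IH h.
Qed.

Lemma anc_antisym u v : anc p u v -> anc p v u -> u = v.
Proof.
move=> /anc_iterP [m hm] /anc_iterP [k hk].
have hN : iter (k + m) p u = u by rewrite iterD hm hk.
have [t ht] := (anc_iterP u r).1 (anc_r u).
case: (posnP (k + m)) => [Z|P].
  by move: Z hm => /eqP; rewrite addn_eq0 => /andP [_ /eqP ->] /= <-.
have hu : u = r.
  have := iter_mul t hN.
  have -> : (k + m) * t = ((k + m) * t - t) + t.
    by rewrite subnK // leq_pmull.
  by rewrite iterD ht iter_fix ?pr_r // => <-.
by rewrite -hm hu iter_fix // pr_r.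
Qed.

Lemma below_child a v : anc p a v -> a != v ->
  exists2 c, c \in children p r v & anc p a c.
Proof.
move=> /anc_iterP [n]; elim: n a => [|n IH] a; first by move=> /= ->; rewrite eqxx.
rewrite iterSr => h av.
case: (eqVneq (p a) v) => [pav|pav].
  exists a; last exact: anc_refl.
  rewrite inE pav eqxx andbT; apply/eqP => ar.
  by move: av; rewrite -pav ar pr_r eqxx.
have [c hc hac] := IH _ h pav.
by exists c => //; apply: anc_trans (anc_p a) hac.
Qed.

Lemma anc_leaf a v : is_leaf p r v -> anc p a v -> a = v.
Proof.
move=> /eqP lv hav; apply/eqP; apply/negPn/negP => av.
by have [c] := below_child hav av; rewrite lv inE.
Qed.

Lemma leaf_root : is_leaf p r r -> forall v, v = r.
Proof. by move=> lr v; apply: anc_leaf lr (anc_r v). Qed.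

Lemma lca_exists a b : exists z, is_lca p a b z.
Proof.
have exP : exists k, anc p b (iter k p a).
  have [t ht] := (anc_iterP a r).1 (anc_r a).
  by exists t; rewrite ht; exact: anc_r.
case: (ex_minnP exP) => k hk hmin.
exists (iter k p a); apply/and3P; split => //; first exact: fconnect_iter.
apply/forallP => w; apply/implyP => /andP [haw hbw].
have hj := iter_findex haw.
have : k <= findex p a w by apply: hmin; rewrite hj.
move=> kj; rewrite -hj -(subnK kj) iterD; exact: fconnect_iter.
Qed.

Lemma is_lca_uniq a b z1 z2 : is_lca p a b z1 -> is_lca p a b z2 -> z1 = z2.
Proof.
move=> /and3P [h1 h2 /forallP h3] /and3P [h4 h5 /forallP h6].
apply: anc_antisym.
  by move/implyP: (h3 z2); apply; rewrite h4 h5.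
by move/implyP: (h6 z1); apply; rewrite h1 h2.
Qed.

Lemma lca_spec a b : is_lca p a b (lca p r a b).
Proof.
rewrite /lca; case: pickP => [z //|].
by have [z hz] := lca_exists a b => /(_ z); rewrite hz.
Qed.

Lemma lca_eq a b z : is_lca p a b z -> lca p r a b = z.
Proof. by move=> h; apply: is_lca_uniq (lca_spec a b) h. Qed.

End TreeLemmas.

Section Star.
Variables (V S : finType) (U : {set V}) (E : {set {set V}}) (sigma : V -> S) (x : V).
Hypothesis xU : x \in U.
Hypothesis sinj : {in U &, injective sigma}.
Hypothesis hadj : forall a b, a \in U -> b \in U -> (adj E a b <-> a != b).

Definition sT := {a : V | a \in U}.
Definition sTr := option sT.
Definition sp (t : sTr) : sTr := None.
Definition slf (a : V) : sTr := insub a.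

Lemma star_leaf (s : sT) : is_leaf sp None (Some s).
Proof. by rewrite /is_leaf /children; apply/eqP/setP => w; rewrite !inE /sp andbF. Qed.

Lemma slfE a (ha : a \in U) : slf a = Some (Sub a ha).
Proof.
rewrite /slf; case: insubP => [u _ hu|]; last by rewrite ha.
by congr Some; apply: val_inj.
Qed.

Lemma star_explains : explains U E sigma sp None slf.
Proof.
split.
- split; first by split => // v; exact: fconnect1.
  by move=> [s|] // _; rewrite star_leaf.
- by move=> a b ha hb; rewrite (slfE ha) (slfE hb) => [[]].
- move=> [s|]; split.
  + by move=> _; exists (val s); [exact: valP | rewrite /slf valK].
  + by move=> _; exact: star_leaf.
  + move/eqP/setP => /(_ (Some (Sub x xU))); rewrite !inE /=.
    by [].
  + by case=> a ha; rewrite (slfE ha).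
- move=> a b ha hb; have [h1 h2] := hadj ha hb.
  have BM : forall c d, c \in U -> d \in U -> c != d -> best_match U sigma sp None slf c d.
    move=> c d hc hd cd; split => //.
      by apply: contra cd => /eqP/sinj ->.
    by move=> y' hy' /sinj -> //; exact: anc_refl.
  split; first by move=> /h1 ab; split; apply: BM => //; rewrite eq_sym.
  by case=> [[_ _ h _] _]; apply: h2; apply: contra h => /eqP ->.
Qed.
End Star.

Section Attach.
Variables (V S : finType) (U' : {set V}) (E1 : {set {set V}}) (sigma : V -> S) (x : V).
Variables (T : finType) (p : T -> T) (r : T) (lf : V -> T).
Hypothesis ex : explains U' E1 sigma p r lf.
Hypothesis nlr : ~~ is_leaf p r r.
Hypothesis xU' : x \notin U'.
Hypothesis uniq : forall y, y \in U' -> sigma y != sigma x.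
Hypothesis hE1 : forall e, e \in E1 -> x \notin e.

Let rt : rooted_tree p r. Proof. by case: ex => [[]]. Qed.
Let ph : phylo_tree p r. Proof. by case: ex. Qed.

Definition aT := option T.
Definition p2 (t : aT) : aT := if t is Some u then Some (p u) else Some r.
Definition r2 : aT := Some r.
Definition lf2 (a : V) : aT := if a == x then None else Some (lf a).

Lemma iter_p2 n t : iter n p2 (Some t) = Some (iter n p t).
Proof. by elim: n => // n IH; rewrite !iterS IH. Qed.

Lemma anc2S u v : anc p2 (Some u) (Some v) = anc p u v.
Proof.
apply/idP/idP.
  by move/iter_findex; rewrite iter_p2 => [[]] <-; exact: fconnect_iter.
by move/iter_findex => <-; rewrite -iter_p2; exact: fconnect_iter.
Qed.

Lemma anc2SN u : anc p2 (Some u) None = false.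
Proof. by apply/negP => /iter_findex; rewrite iter_p2. Qed.

Lemma anc2NS v : anc p2 None (Some v) = (v == r).
Proof.
apply/idP/idP.
  move/iter_findex; case: (findex _ _ _) => // n.
  by rewrite iterSr /= iter_p2 iter_fix ?(pr_r rt) // => [[]] ->.
by move/eqP ->; exact: fconnect1.
Qed.

Lemma rooted2 : rooted_tree p2 r2.
Proof.
split; first by rewrite /r2 /= (pr_r rt).
case=> [u|]; first by have := anc2S u r; rewrite /anc /r2 => ->; exact: (anc_r rt).
exact: fconnect1.
Qed.

Lemma children2P v w : w \in children p2 r2 (Some v) =
  if w is Some c then c \in children p r v else v == r.
Proof.
rewrite !inE; case: w => [c|] /=.
  by rewrite /r2 inE !(inj_eq (@Some_inj _)).
by rewrite (inj_eq (@Some_inj _)) eq_sym.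
Qed.

Lemma children2N w : w \in children p2 r2 None = false.
Proof. rewrite !inE; case: w => [?|] /=. 
have -> : forall (a : T), (Some a == None) = false by [].
by rewrite andbF.
by []. Qed.

Lemma leaf2S t : is_leaf p2 r2 (Some t) = is_leaf p r t.
Proof.
rewrite /is_leaf; apply/idP/idP.
  move/eqP/setP => h; apply/eqP/setP => c; have := h (Some c).
  by rewrite children2P in_set0 => ->; rewrite in_set0.
move=> lt; apply/eqP/setP => w; rewrite children2P in_set0.
case: w => [c|]; first by move/eqP: lt ->; rewrite in_set0.
by apply/negP => /eqP rt'; subst t; move: nlr; rewrite /is_leaf lt.
Qed.

Lemma leaf2N : is_leaf p2 r2 None.
Proof. by rewrite /is_leaf; apply/eqP/setP => w; rewrite children2N in_set0. Qed.

Lemma phylo2 : phylo_tree p2 r2.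
Proof.
split; first exact: rooted2.
case=> [v|] vr; last by rewrite leaf2N.
rewrite leaf2S => nl.
have vr' : v != r by apply: contra vr => /eqP ->.
have := ph.2 v vr' nl => h; apply: leq_trans h _.
rewrite -(card_imset _ (@Some_inj _)); apply: subset_leq_card.
by apply/subsetP => w /imsetP [c hc ->]; rewrite children2P.
Qed.

Lemma lca2SS a b : lca p2 r2 (Some a) (Some b) = Some (lca p r a b).
Proof.
apply: (lca_eq rooted2).
have /and3P [h1 h2 /forallP h3] := lca_spec rt a b.
apply/and3P; split; rewrite ?anc2S //.
apply/forallP => [[w|]]; last by rewrite anc2SN.
by rewrite !anc2S; exact: h3.
Qed.

Lemma lca2NS b : lca p2 r2 None (Some b) = Some r.
Proof.
apply: (lca_eq rooted2).
apply/and3P; split; rewrite ?anc2NS ?anc2S ?eqxx ?(anc_r rt) //.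
apply/forallP => [[w|]]; last by rewrite anc2SN andbF.
by rewrite anc2NS; apply/implyP => /andP [/eqP -> _]; exact: anc_refl.
Qed.

Lemma lca2SN b : lca p2 r2 (Some b) None = Some r.
Proof.
apply: (lca_eq rooted2).
apply/and3P; split; rewrite ?anc2NS ?anc2S ?eqxx ?(anc_r rt) //.
apply/forallP => [[w|]]; last by rewrite anc2SN.
by rewrite anc2NS; apply/implyP => /andP [_ /eqP ->]; exact: anc_refl.
Qed.

Definition U2 := x |: U'.
Definition E2 := E1 :|: [set [set x; y] | y in U'].

Lemma lf2E a : a != x -> lf2 a = Some (lf a).
Proof. by rewrite /lf2 => /negbTE ->. Qed.

Lemma inU2 a : a \in U2 -> a != x -> a \in U'.
Proof. by rewrite !inE => /orP [/eqP -> | //]; rewrite eqxx. Qed.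

Lemma notx y' b : b \in U' -> sigma y' = sigma b -> y' != x.
Proof. by move=> hb hc; apply/eqP => e; subst y'; have := uniq hb; rewrite hc eqxx. Qed.

Lemma bm2_old a b : a \in U' -> b \in U' ->
  best_match U2 sigma p2 r2 lf2 a b <-> best_match U' sigma p r lf a b.
Proof.
move=> ha hb.
have ax : a != x by apply: contraNneq xU' => <-.
have bx : b != x by apply: contraNneq xU' => <-.
split.
  case=> _ _ hs h; split => // y' hy' hc.
  have y'x : y' != x by apply: contraNneq xU' => <-.
  have := h y'; rewrite !lf2E // !lca2SS anc2S; apply => //.
  by rewrite inE hy' orbT.
case=> _ _ hs h; split; rewrite ?inE ?ha ?hb ?orbT // => y' hy' hc.
have y'x : y' != x by exact: notx hc.
rewrite !lf2E // !lca2SS anc2S; apply: h => //; exact: inU2.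
Qed.

Lemma bm2_xb b : b \in U' -> best_match U2 sigma p2 r2 lf2 x b.
Proof.
move=> hb.
have bx : b != x by apply: contraNneq xU' => <-.
split; rewrite ?inE ?eqxx ?hb ?orbT //; first by rewrite eq_sym uniq.
move=> y' hy' hc.
have y'x : y' != x by exact: notx hc.
have -> : lf2 x = None by rewrite /lf2 eqxx.
rewrite !lf2E // !lca2NS; exact: anc_refl.
Qed.

Lemma bm2_bx b : b \in U' -> best_match U2 sigma p2 r2 lf2 b x.
Proof.
move=> hb.
have bx : b != x by apply: contraNneq xU' => <-.
split; rewrite ?inE ?eqxx ?hb ?orbT //; first by rewrite uniq.
move=> y' hy' hc.
have -> : y' = x.
  apply/eqP; apply/negPn/negP => y'x.
  by have := uniq (inU2 hy' y'x); rewrite hc eqxx.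
exact: anc_refl.
Qed.

Lemma adj2_old a b : a \in U' -> b \in U' -> adj E2 a b = adj E1 a b.
Proof.
move=> ha hb; rewrite /adj /E2 inE; congr (_ && _).
case h: ([set a; b] \in E1) => //=.
apply/negP => /imsetP [y hy e].
have : x \in [set a; b] by rewrite e !inE eqxx.
by rewrite !inE => /orP [] /eqP xe; move: xU'; rewrite xe ?ha ?hb.
Qed.

Lemma adj2_xb b : b \in U' -> adj E2 x b.
Proof.
move=> hb; rewrite /adj /E2 inE; apply/andP; split.
  by apply: contraNneq xU' => ->.
by apply/orP; right; apply/imsetP; exists b.
Qed.

Lemma adj_sym (F : {set {set V}}) a b : adj F a b = adj F b a.
Proof. by rewrite /adj eq_sym setUC. Qed.

Lemma attach_explains : explains U2 E2 sigma p2 r2 lf2.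
Proof.
have [_ linj lleaf hiff] := ex.
split.
- exact: phylo2.
- move=> a b ha hb; rewrite /lf2.
  case: (eqVneq a x) => [->|ax]; case: (eqVneq b x) => [->|bx] //.
  move=> [] /linj; apply; exact: inU2.
- case=> [t|]; last first.
    split => _; last exact: leaf2N.
    by exists x; [rewrite !inE eqxx | rewrite /lf2 eqxx].
  rewrite leaf2S; split.
    move/(lleaf t).1 => [a ha <-]; exists a; rewrite ?inE ?ha ?orbT //.
    by rewrite lf2E //; apply: contraNneq xU' => <-.
  move=> [a ha]; rewrite /lf2; case: eqP => // /eqP ax [<-].
  by apply/(lleaf _).2; exists a => //; exact: inU2.
- move=> a b ha hb.
  case: (eqVneq a x) => [->|ax]; case: (eqVneq b x) => [->|bx].
  + by split => [|[[_ _]]]; rewrite ?eqxx /adj ?eqxx.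
  + have hb' := inU2 hb bx.
    by split => _; [split; [exact: bm2_xb | exact: bm2_bx] | exact: adj2_xb].
  + have ha' := inU2 ha ax.
    by split => _; [split; [exact: bm2_bx | exact: bm2_xb] | rewrite adj_sym; exact: adj2_xb].
  + have ha' := inU2 ha ax; have hb' := inU2 hb bx.
    rewrite adj2_old //; split.
      by move/(hiff _ _ ha' hb').1 => [h1 h2]; split; apply/bm2_old.
    by move=> [/bm2_old h1 /bm2_old h2]; apply/(hiff _ _ ha' hb').2; split; [apply: h1 | apply: h2].
Qed.

End Attach.

Section Restrict.
Variables (V S : finType) (U : {set V}) (E2 : {set {set V}}) (sigma : V -> S) (x : V).
Variables (T : finType) (p : T -> T) (r : T) (lf : V -> T).
Hypothesis ex : explains U E2 sigma p r lf.
Hypothesis xU : x \in U.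
Hypothesis uniq : forall y, y \in U -> y != x -> sigma y != sigma x.
Variable y0 : V.
Hypothesis y0U : y0 \in U.
Hypothesis y0x : y0 != x.

Let rt : rooted_tree p r. Proof. by case: ex => [[]]. Qed.
Let ph : phylo_tree p r. Proof. by case: ex. Qed.
Let linj : {in U &, injective lf}. Proof. by case: ex. Qed.
Let lleaf t : is_leaf p r t <-> exists2 a, a \in U & lf a = t. Proof. by case: ex. Qed.

Definition ll := lf x.
Definition qq := p ll.

Lemma leaf_lf a : a \in U -> is_leaf p r (lf a).
Proof. by move=> ha; apply/(lleaf _).2; exists a. Qed.

Lemma ll_leaf : is_leaf p r ll. Proof. exact: leaf_lf. Qed.

Lemma lf_neq a : a \in U -> a != x -> lf a != ll.
Proof. by move=> ha ax; apply: contra ax => /eqP /linj -> //. Qed.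

Lemma ll_r : ll != r.
Proof.
apply/eqP => e; have lr : is_leaf p r r by move: ll_leaf; rewrite e.
by have := lf_neq y0U y0x; rewrite (leaf_root rt lr (lf y0)) e eqxx.
Qed.

Lemma qq_ll : qq != ll.
Proof. by apply/eqP => /(fix_root rt) e; move: ll_r; rewrite e eqxx. Qed.

Lemma ll_child : ll \in children p r qq.
Proof. by rewrite inE ll_r eqxx. Qed.

Lemma qq_nonleaf : ~~ is_leaf p r qq.
Proof. by rewrite /is_leaf; apply/set0Pn; exists ll; exact: ll_child. Qed.

Lemma child_nonleaf c v : c \in children p r v -> ~~ is_leaf p r v.
Proof. by move=> h; rewrite /is_leaf; apply/set0Pn; exists c. Qed.

Definition dropv t := (t == ll) || [&& t == qq, qq != r & #|children p r qq| == 2].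
Definition keepv t := ~~ dropv t.

Lemma keep_r : keepv r.
Proof.
rewrite /keepv /dropv negb_or eq_sym ll_r /=.
by apply/negP => /and3P [/eqP -> /eqP].
Qed.

Definition RT := {t : T | keepv t}.
Definition r' : RT := Sub r keep_r.
Definition pp u := if keepv (p u) then p u else p (p u).
Definition p' (t : RT) : RT := insubd r' (pp (val t)).

Lemma p_neq_l u : keepv u -> p u != ll.
Proof.
move=> ku; apply/eqP => e.
have h : anc p u ll by rewrite -e; exact: anc_p.
have ul := anc_leaf rt ll_leaf h.
by move: ku; rewrite /keepv /dropv ul eqxx.
Qed.

Lemma drop_eq t : dropv t -> t != ll -> [/\ t = qq, qq != r & #|children p r qq| == 2].
Proof. by rewrite /dropv => /orP [->//|/and3P [/eqP -> h1 h2]] _. Qed.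

Lemma pqq_keep : qq != r -> keepv (p qq).
Proof.
move=> qr; rewrite /keepv /dropv negb_or; apply/andP; split.
  apply/eqP => e; have h0 : anc p qq ll by rewrite -e; exact: anc_p.
  have h := anc_leaf rt ll_leaf h0.
  by move: qq_ll; rewrite h eqxx.
apply/negP => /and3P [/eqP /(fix_root rt) e _ _].
by move: qr; rewrite e eqxx.
Qed.

Lemma keep_pp u : keepv u -> keepv (pp u).
Proof.
move=> ku; rewrite /pp; case: ifP => // /negbFE dp.
by have [-> qr _] := drop_eq dp (p_neq_l ku); exact: pqq_keep.
Qed.

Lemma val_p' t : val (p' t) = pp (val t).
Proof. by rewrite /p' insubdK //; apply: keep_pp; exact: valP. Qed.

Lemma anc_pp u : anc p u (pp u).
Proof.
rewrite /pp; case: ifP => _; first exact: anc_p.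
exact: anc_trans (anc_p p u) (anc_p p (p u)).
Qed.

Lemma anc'_val (u v : RT) : anc p' u v -> anc p (val u) (val v).
Proof.
move/iter_findex => <-; elim: (findex _ _ _) => [|n IH]; first exact: anc_refl.
by rewrite iterS val_p'; apply: anc_trans IH (anc_pp _).
Qed.

Lemma lift_anc n (u : RT) : keepv (iter n p (val u)) ->
  exists v : RT, val v = iter n p (val u) /\ anc p' u v.
Proof.
elim: n {-2}n (leqnn n) u => [|N IH] n.
  by rewrite leqn0 => /eqP -> u _; exists u; split => //; exact: anc_refl.
case: n => [|n] nN u.
  by move=> _; exists u; split => //; exact: anc_refl.
rewrite iterSr => kit.
have ku := valP u.
case kp: (keepv (p (val u))).
  have [v [hv hav]] := IH n nN (Sub (p (val u)) kp) kit.
  exists v; split => //.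
  apply: anc_trans _ hav.
  have e : p' u = Sub (p (val u)) kp.
    by apply: val_inj; rewrite val_p' /pp kp.
  by rewrite -e; apply: fconnect1.
have [pe qr _] := drop_eq (negbFE kp) (p_neq_l ku).
case: n nN kit => [|n] nN kit.
  by move: kit; rewrite /= kp.
move: kit; rewrite iterSr pe => kit.
have kq := pqq_keep qr.
have [v [hv hav]] := IH n (leq_trans (leqnSn _) nN) (Sub (p qq) kq) kit.
exists v; split => //.
have e : p' u = Sub (p qq) kq.
  by apply: val_inj; rewrite val_p' /pp kp pe.
apply: anc_trans _ hav; rewrite -e; exact: fconnect1.
Qed.

Lemma anc'E (u v : RT) : anc p' u v = anc p (val u) (val v).
Proof.
apply/idP/idP; first exact: anc'_val.
move/iter_findex => e.
have := @lift_anc (findex p (val u) (val v)) u; rewrite e => /(_ (valP v)).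
by case=> w [/val_inj -> ].
Qed.

Lemma rooted' : rooted_tree p' r'.
Proof.
split.
  by apply: val_inj; rewrite val_p' /pp /= (pr_r rt) keep_r.
by move=> v; have := anc'E v r'; rewrite /anc => ->; exact: (anc_r rt).
Qed.


Lemma neq_r' (w : RT) : (w != r') = (val w != r).
Proof. by rewrite -(inj_eq val_inj). Qed.

Lemma children'P (v w : RT) :
  (w \in children p' r' v) = (val w != r) && (pp (val w) == val v).
Proof. by rewrite !inE neq_r' -(inj_eq val_inj) val_p'. Qed.

Lemma child'_nonleaf (v w : RT) : w \in children p' r' v -> ~~ is_leaf p r (val v).
Proof.
rewrite children'P => /andP [wr /eqP]; rewrite /pp; case: ifP => kp e.
  by apply: (child_nonleaf (c := val w)); rewrite inE; apply/andP; split => //; apply/eqP.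
have [pe qr _] := drop_eq (negbFE kp) (p_neq_l (valP w)).
by apply: (child_nonleaf (c := qq)); rewrite inE; apply/andP; split => //; apply/eqP; rewrite -e pe.
Qed.

Definition ss := odflt ll [pick c in children p r qq :\ ll].

Lemma ss_spec : dropv qq ->
  [/\ ss \in children p r qq, ss != ll &
      forall c, c \in children p r qq -> c != ll -> c = ss].
Proof.
move=> dq; have [_ qr /eqP c2] := drop_eq dq qq_ll.
have : #|children p r qq :\ ll| == 1.
  by move: c2; rewrite (cardsD1 ll) ll_child add1n => [[->]].
case/cards1P => s0 hs.
have hss : ss = s0.
  rewrite /ss; case: pickP => [c|]; first by rewrite hs inE => /eqP.
  by move/(_ s0); rewrite hs inE eqxx.
have hs0 : s0 \in children p r qq :\ ll by rewrite hs set11.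
move: hs0; rewrite in_setD1 => /andP [s0l s0c]; rewrite hss; split => // c hc cl.
by apply/set1P; rewrite -hs in_setD1 cl hc.
Qed.

Lemma child_ne_self c v : c \in children p r v -> c != v.
Proof.
rewrite inE => /andP [cr /eqP pc]; apply/eqP => e.
have pcc : p c = c by rewrite pc e.
by move: cr; rewrite (fix_root rt pcc) eqxx.
Qed.

Lemma child_p c v : c \in children p r v -> p c = v.
Proof. by rewrite inE => /andP [_ /eqP]. Qed.

Lemma ss_parent : dropv qq -> p ss = qq.
Proof. by case/ss_spec => /child_p. Qed.

Lemma ss_keep : dropv qq -> keepv ss /\ pp ss = p qq.
Proof.
move=> dq; have [hs sl _] := ss_spec dq.
have [_ qr _] := drop_eq dq qq_ll.
have ps : p ss = qq by move: hs; rewrite inE => /andP [_ /eqP].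
have sq : ss != qq by exact: child_ne_self hs.
split.
  by rewrite /keepv /dropv negb_or sl /= negb_and sq.
by rewrite /pp ps /keepv dq.
Qed.

Lemma child'_exists (v : RT) c : c \in children p r (val v) -> c != ll ->
  exists w, w \in children p' r' v.
Proof.
move=> hc cl; move: (hc); rewrite inE => /andP [cr /eqP pc].
case kc: (keepv c).
  exists (Sub c kc); rewrite children'P /= cr /pp pc.
  have kv : keepv (val v) := valP v.
  by rewrite kv; apply/eqP.
have [ce qr c2] := drop_eq (negbFE kc) cl.
have dq : dropv qq by rewrite /dropv qr c2 eqxx orbT.
have [ks pps] := ss_keep dq.
have [hs _ _] := ss_spec dq.
exists (Sub ss ks); rewrite children'P /= pps -ce pc eqxx andbT.
by move: hs; rewrite inE => /andP [].
Qed.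

Lemma other_child : exists2 c, c \in children p r qq & c != ll.
Proof.
case: (eqVneq qq r) => [qr|qr].
  set m := lf y0.
  have ml : m != ll by exact: lf_neq.
  have lm : is_leaf p r m by exact: leaf_lf.
  have mr : m != r.
    apply/eqP => e; have lr : is_leaf p r r by move: lm; rewrite e.
    by move: qq_nonleaf; rewrite qr lr.
  have [c hc hmc] := below_child rt (anc_r rt m) mr.
  exists c; first by rewrite qr.
  apply: contra ml => /eqP e; have lc : is_leaf p r c by rewrite e; exact: ll_leaf.
  by rewrite (anc_leaf rt lc hmc) e.
have := ph.2 qq qr qq_nonleaf; rewrite (cardsD1 ll) ll_child add1n ltnS.
by case/card_gt0P => c; rewrite in_setD1 => /andP [cl hc]; exists c.
Qed.

Lemma leaf'E (t : RT) : is_leaf p' r' t = is_leaf p r (val t).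
Proof.
apply/idP/idP; last first.
  by move=> lt; apply/set0Pn => [[w /child'_nonleaf]]; rewrite lt.
move=> lt; apply/negPn/negP => /set0Pn [c hc].
case: (eqVneq c ll) => [cl|cl]; last first.
  by have [w hw] := child'_exists hc cl; move/eqP: lt => lt; move: hw; rewrite lt inE.
have tq : val t = qq by move: hc; rewrite inE cl => /andP [_ /eqP].
have [c' hc' c'l] := other_child.
rewrite -tq in hc'.
by have [w hw] := child'_exists hc' c'l; move/eqP: lt => lt; move: hw; rewrite lt inE.
Qed.

Lemma card_ge3 (v : RT) : val v = qq -> qq != r -> 2 <= #|children p r qq| -> 3 <= #|children p r qq|.
Proof.
move=> vq qr h; have kv := valP v; rewrite vq in kv.
have : #|children p r qq| != 2.
  by apply: contra kv => c2; rewrite /keepv /dropv qr c2 eqxx orbT.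
by rewrite ltn_neqAle eq_sym => ->.
Qed.

Lemma phylo' : phylo_tree p' r'.
Proof.
split; first exact: rooted'.
move=> v vr; rewrite leaf'E => nl.
rewrite neq_r' in vr.
have c2 := ph.2 _ vr nl.
have kv : keepv (val v) := valP v.
case: (eqVneq (val v) qq) => [vq|vq].
  have qr : qq != r by rewrite -vq.
  have c2q : 2 <= #|children p r qq| by rewrite -vq.
  have c3 := card_ge3 vq qr c2q.
  have : 2 <= #|children p r qq :\ ll|.
    by move: c3; rewrite (cardsD1 ll) ll_child add1n ltnS.
  move=> h; apply: leq_trans h _.
  have hk : forall c, c \in children p r qq :\ ll -> keepv c.
    move=> c; rewrite in_setD1 => /andP [cl hc]; rewrite /keepv /dropv negb_or cl /=.
    by rewrite negb_and (child_ne_self hc).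
  rewrite -(@card_in_imset _ _ (insubd r')); last first.
    by move=> c1 c2' h1 h2 e; rewrite -(insubdK r' (hk _ h1)) -(insubdK r' (hk _ h2)) e.
  apply: subset_leq_card; apply/subsetP => w /imsetP [c hc ->].
  have kc := hk c hc.
  move: hc; rewrite inE => /andP [_]; rewrite inE => /andP [cr /eqP pc].
  rewrite children'P insubdK // cr /pp pc vq /=.
  by rewrite -vq kv.
pose g c := if keepv c then c else ss.
have hg : forall c, c \in children p r (val v) -> keepv (g c) /\ (g c != r) /\ pp (g c) = val v /\ (~~ keepv c -> g c = ss /\ c = qq).
  move=> c hc; move: (hc); rewrite inE => /andP [cr /eqP pc].
  have cl : c != ll by apply/eqP => e; move: vq; rewrite -pc e eqxx.
  rewrite /g; case: ifP => kc.
    by split => //; split => //; split => //; rewrite /pp pc kv.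
  have [ce qr c2'] := drop_eq (negbFE kc) cl.
  have dq : dropv qq by rewrite /dropv qr c2' eqxx orbT.
  have [ks pps] := ss_keep dq.
  have [hs _ _] := ss_spec dq.
  split => //; split; first by move: hs; rewrite inE => /andP [].
  by split => //; rewrite pps -ce pc.
apply: leq_trans c2 _.
rewrite -(@card_in_imset _ _ (fun c => insubd r' (g c))); last first.
  move=> c1 c2' h1 h2 e.
  have [k1 [_ [p1 d1]]] := hg _ h1; have [k2 [_ [p2 d2]]] := hg _ h2.
  have e' : g c1 = g c2' by rewrite -(insubdK r' k1) -(insubdK r' k2) e.
  have pc1 := child_p h1; have pc2 := child_p h2.
  move: e'; rewrite /g; case: ifP => kc1; case: ifP => kc2 // e'.
  - have [_ e2] := d2 (negbT kc2).
    have dq : dropv qq by rewrite -e2; exact: negbFE kc2.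
    by move: vq; rewrite -pc1 e' ss_parent // eqxx.
  - have [_ e1] := d1 (negbT kc1).
    have dq : dropv qq by rewrite -e1; exact: negbFE kc1.
    by move: vq; rewrite -pc2 -e' ss_parent // eqxx.
  - by have [_ e1] := d1 (negbT kc1); have [_ e2] := d2 (negbT kc2); rewrite e1 e2.
apply: subset_leq_card; apply/subsetP => w /imsetP [c hc ->].
have [k1 [gr [pg _]]] := hg _ hc.
by rewrite children'P insubdK // gr pg eqxx.
Qed.

Lemma desc_ss (u : T) : keepv u -> dropv qq -> anc p u qq -> anc p u ss.
Proof.
move=> ku dq huq; have [hs sl huniq] := ss_spec dq.
have uq : u != qq by apply/eqP => e; move: ku; rewrite /keepv e dq.
have [c hc huc] := below_child rt huq uq.
have cl : c != ll.
  apply/eqP => e; have lc : is_leaf p r c by rewrite e; exact: ll_leaf.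
  by move: ku; rewrite /keepv /dropv (anc_leaf rt lc huc) e eqxx.
by rewrite -(huniq c hc cl).
Qed.

Lemma lca_keep (a b : RT) : keepv (lca p r (val a) (val b)).
Proof.
have /and3P [ha hb /forallP hall] := lca_spec rt (val a) (val b).
set z := lca p r (val a) (val b) in ha hb hall *.
have ka : keepv (val a) := valP a; have kb : keepv (val b) := valP b.
rewrite /keepv /dropv negb_or; apply/andP; split.
  apply/eqP => e; have lz : is_leaf p r z by rewrite e; exact: ll_leaf.
  by move: ka; rewrite /keepv /dropv (anc_leaf rt lz ha) e eqxx.
apply/negP => /and3P [/eqP zq qr c2].
have dq : dropv qq by rewrite /dropv qr c2 eqxx orbT.
have [hs _ _] := ss_spec dq.
rewrite zq in ha hb hall.
have has := desc_ss ka dq ha; have hbs := desc_ss kb dq hb.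
have := hall ss; rewrite has hbs /= => hqs.
have hsq : anc p ss qq by rewrite -(child_p hs); exact: anc_p.
have := child_ne_self hs; by rewrite (anc_antisym rt hsq hqs) eqxx.
Qed.

Lemma lcaE (a b : RT) : val (lca p' r' a b) = lca p r (val a) (val b).
Proof.
have kz := lca_keep a b.
suff -> : lca p' r' a b = Sub _ kz by [].
apply: (lca_eq rooted'); rewrite /is_lca !anc'E /=.
have /and3P [h1 h2 /forallP h3] := lca_spec rt (val a) (val b).
apply/and3P; split => //; apply/forallP => w; rewrite !anc'E; exact: h3.
Qed.

Definition U' := U :\ x.
Definition E3 := [set e in E2 | x \notin e].
Definition lf' a : RT := insubd r' (lf a).

Lemma keep_lf a : a \in U' -> keepv (lf a).
Proof.
rewrite in_setD1 => /andP [ax ha]; rewrite /keepv /dropv negb_or lf_neq //=.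
apply/negP => /and3P [/eqP e _ _].
by move: qq_nonleaf; rewrite -e leaf_lf.
Qed.

Lemma val_lf' a : a \in U' -> val (lf' a) = lf a.
Proof. by move=> ha; rewrite /lf' insubdK //; exact: keep_lf. Qed.

Lemma bm'E a b : a \in U' -> b \in U' ->
  best_match U' sigma p' r' lf' a b <-> best_match U sigma p r lf a b.
Proof.
move=> ha hb; have := ha; have := hb; rewrite !in_setD1 => /andP [bx hb0] /andP [ax ha0].
split.
  case=> _ _ hs h; split => // y' hy' hc.
  have y'x : y' != x.
    by apply/eqP => e; have := uniq hb0 bx; rewrite -hc e eqxx.
  have hy'' : y' \in U' by rewrite in_setD1 y'x.
  by have := h y' hy'' hc; rewrite anc'E !lcaE !val_lf'.
case=> _ _ hs h; split => // y' hy' hc.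
have hy'' : y' \in U by move: hy'; rewrite in_setD1 => /andP [].
by rewrite anc'E !lcaE !val_lf' //; apply: h.
Qed.

Lemma restrict_explains : explains U' E3 sigma p' r' lf'.
Proof.
split.
- exact: phylo'.
- move=> a b ha hb /(f_equal val); rewrite !val_lf' // => /linj; apply.
    by move: ha; rewrite in_setD1 => /andP [].
  by move: hb; rewrite in_setD1 => /andP [].
- move=> t; rewrite leaf'E; split.
    move/(lleaf _).1 => [a ha e].
    have ax : a != x.
      apply/eqP => ex'; have kt : keepv (val t) := valP t.
      by move: kt; rewrite /keepv /dropv -e ex' eqxx.
    have ha' : a \in U' by rewrite in_setD1 ax.
    by exists a => //; apply: val_inj; rewrite val_lf'.
  case=> a ha <-; rewrite val_lf' //; apply: leaf_lf.
  by move: ha; rewrite in_setD1 => /andP [].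
- move=> a b ha hb.
  have ex3 : adj E3 a b = adj E2 a b.
    rewrite /adj /E3 inE; congr (_ && _).
    have := ha; have := hb; rewrite !in_setD1 => /andP [bx _] /andP [ax _].
    have -> : x \notin [set a; b] by rewrite !inE negb_or eq_sym ax eq_sym bx.
    by rewrite andbT.
  rewrite ex3.
  have ha0 : a \in U by move: ha; rewrite in_setD1 => /andP [].
  have hb0 : b \in U by move: hb; rewrite in_setD1 => /andP [].
  have [_ _ _ hiff] := ex.
  split.
    by move/(hiff _ _ ha0 hb0).1 => [h1 h2]; split; apply/bm'E.
  by case=> /bm'E h1 /bm'E h2; apply/(hiff _ _ ha0 hb0).2; split; [apply: h1 | apply: h2].
Qed.

End Restrict.

Lemma explains_proper (V S : finType) (U : {set V}) E (sigma : V -> S)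
  (T : finType) (p : T -> T) (r : T) (lf : V -> T) : explains U E sigma p r lf -> Defs.proper U E sigma.
Proof. by case=> _ _ _ h a b ha hb /(h _ _ ha hb) [[_ _ ? _] _]. Qed.

Section Main.
Variables (V S : finType) (U : {set V}) (E : {set {set V}}) (sigma : V -> S) (n : nat) (x : V).
Hypothesis pc : properly_colored U E sigma n.
Hypothesis hb : hub U E x.

Let wfE : wf_graph U E. Proof. by case: pc. Qed.
Let prE : Defs.proper U E sigma. Proof. by case: pc. Qed.
Let ncE : ncolors U sigma = n. Proof. by case: pc. Qed.
Let xU : x \in U. Proof. by case: hb. Qed.

Definition U1 := U :\ x.
Definition X := [set [set x; y] | y in U1].

Lemma uniqc y : y \in U -> y != x -> sigma y != sigma x.
Proof.
move=> hy yx; have h := hb.2 y hy yx.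
by rewrite eq_sym; exact: prE h.
Qed.

Lemma uniqc' y : y \in U1 -> sigma y != sigma x.
Proof. by rewrite in_setD1 => /andP [yx hy]; exact: uniqc. Qed.

Lemma ncol1 : ncolors U1 sigma = n.-1.
Proof.
rewrite -ncE /ncolors -(setD1K xU) imsetU1 cardsU1.
have -> : sigma x \notin sigma @: U1.
  by apply/imsetP => [[y hy /eqP]]; rewrite eq_sym (negbTE (uniqc' hy)).
by [].
Qed.

Lemma pairs1 e : e \in pairs U1 -> e \in pairs U.
Proof.
rewrite !inE => /andP [hs ->]; rewrite andbT; apply: subset_trans hs _.
exact: subD1set.
Qed.

Lemma pairs2 e : e \in pairs U -> x \notin e -> e \in pairs U1.
Proof.
rewrite !inE => /andP [hs ->] xe; rewrite andbT; apply/subsetP => y hy.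
by rewrite in_setD1 (subsetP hs _ hy) andbT; apply: contraNneq xe => <-.
Qed.

Lemma pair_x e : e \in pairs U -> x \in e -> e \in X.
Proof.
rewrite inE => /andP [hs /eqP c2] xe.
have : #|e :\ x| == 1 by move: c2; rewrite (cardsD1 x) xe add1n => [[->]].
case/cards1P => y hy.
have ye : y \in e :\ x by rewrite hy set11.
move: (ye); rewrite in_setD1 => /andP [yx ye'].
apply/imsetP; exists y; first by rewrite in_setD1 yx (subsetP hs).
by rewrite -(setD1K xe) hy.
Qed.

Lemma memX e : (e \in X) = (e \in E) && (x \in e).
Proof.
apply/idP/idP.
  case/imsetP => y; rewrite in_setD1 => /andP [yx hy] ->.
  have := hb.2 y hy yx; rewrite /adj => /andP [_ ->].
  by rewrite !inE eqxx.
by case/andP => eE xe; apply: pair_x => //; exact: (subsetP wfE).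
Qed.

Lemma X_pairs e : e \in X -> e \in pairs U.
Proof. by rewrite memX => /andP [eE _]; exact: (subsetP wfE). Qed.

Lemma addA (E1 : {set {set V}}) : E1 \subset pairs U1 ->
  nRBMG U1 E1 sigma n.-1 -> nRBMG U (E1 :|: X) sigma n.
Proof.
move=> hE1 [[_ _ _] hT].
have xU1 : x \notin U1 by rewrite in_setD1 eqxx.
have UU : x |: U1 = U by rewrite setD1K.
suff [T [p [r [lf ex]]]] : exists (T : finType) (p : T -> T) (r : T) (lf : V -> T),
    explains U (E1 :|: X) sigma p r lf.
  split; last by right; exists T, p, r, lf.
  split => //; last exact: explains_proper ex.
  apply/subsetP => e; rewrite inE => /orP [h|h]; last exact: X_pairs.
  by apply: pairs1; exact: (subsetP hE1).
have small : (forall a b, a \in U1 -> b \in U1 -> a = b) ->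
    exists (T : finType) (p : T -> T) (r : T) (lf : V -> T),
    explains U (E1 :|: X) sigma p r lf.
  move=> hs; do 4 eexists; apply: (star_explains xU).
    move=> a b ha hb' e.
    case: (eqVneq a x) => [ax|ax]; case: (eqVneq b x) => [bx|bx].
    + by rewrite ax bx.
    + by move: (uniqc hb' bx); rewrite -e ax eqxx.
    + by move: (uniqc ha ax); rewrite e bx eqxx.
    + by apply: hs; rewrite in_setD1 ?ax ?bx.
  move=> a b ha hb'; split; first by case/andP.
  move=> ab; rewrite /adj ab /= inE; apply/orP.
  case: (eqVneq a x) => [ax|ax]; case: (eqVneq b x) => [bx|bx].
  + by move: ab; rewrite ax bx eqxx.
  + by right; apply/imsetP; exists b; rewrite ?in_setD1 ?bx // ax.
  + by right; apply/imsetP; exists a; rewrite ?in_setD1 ?ax // bx setUC.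
  + by move: ab; rewrite (hs a b) ?eqxx // in_setD1 ?ax ?bx.
case: hT => [U10|[T [p [r [lf ex]]]]].
  by apply: small => a b; rewrite U10 inE.
case: (boolP (is_leaf p r r)) => lr.
  apply: small => a b ha hb'.
  have [_ linj _ _] := ex.
  have [[rt _] _ _ _] := ex.
  by apply: linj => //; rewrite (leaf_root rt lr (lf a)) (leaf_root rt lr (lf b)).
exists (option T), (p2 p r), (r2 r), (lf2 x lf).
rewrite -{1}UU; apply: attach_explains => //.
exact: uniqc'.
Qed.

Lemma remB (E2 : {set {set V}}) : nRBMG U E2 sigma n ->
  nRBMG U1 [set e in E2 | x \notin e] sigma n.-1.
Proof.
move=> [[wf2 pr2 _] hT]; split.
  split; last exact: ncol1.
    apply/subsetP => e; rewrite inE => /andP [h xe].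
    by apply: pairs2 => //; exact: (subsetP wf2).
  move=> a b ha hb' /andP [ab]; rewrite inE => /andP [h _].
  apply: pr2; rewrite ?(subsetP (subD1set U x)) //.
  by rewrite /adj ab h.
case: hT => [U0|[T [p [r [lf ex]]]]]; first by move: xU; rewrite U0 inE.
case: (set_0Vmem U1) => [->|[y0 hy0]]; first by left.
move: (hy0); rewrite in_setD1 => /andP [y0x y0U].
right; do 4 eexists; exact: (restrict_explains ex xU uniqc y0U y0x).
Qed.

Definition E1' := [set e in E | x \notin e].

Lemma del1 F : deletion_set U E sigma n F ->
  deletion_set U1 E1' sigma n.-1 [set e in F | x \notin e].
Proof.
case=> hF h; split.
  apply/subsetP => e; rewrite !inE => /andP [eF ->]; by rewrite (subsetP hF).
have -> : E1' :\: [set e in F | x \notin e] = [set e in E :\: F | x \notin e].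
  by apply/setP => e; rewrite /E1' !inE; case: (x \in e); rewrite /= ?andbF ?andbT // andbC.
exact: remB.
Qed.

Lemma del2 F : deletion_set U1 E1' sigma n.-1 F -> deletion_set U E sigma n F.
Proof.
case=> hF h; split.
  by apply/subsetP => e /(subsetP hF); rewrite inE => /andP [].
have -> : E :\: F = (E1' :\: F) :|: X.
  apply/setP => e; rewrite !inE memX.
  case: (boolP (x \in e)) => xe; rewrite ?andbT ?andbF /= ?orbF.
    have -> : e \in F = false.
      by apply/negP => /(subsetP hF); rewrite inE xe andbF.
    by [].
  by [].
apply: addA => //.
apply/subsetP => e; rewrite !inE => /andP [_ /andP [xe eE]].
by have := pairs2 (subsetP wfE _ xe) eE; rewrite inE.
Qed.

Lemma edit1 F : edit_set U E sigma n F ->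
  edit_set U1 E1' sigma n.-1 [set e in F | x \notin e].
Proof.
case=> hF h; split.
  apply/subsetP => e; rewrite inE => /andP [eF xe].
  exact: pairs2 (subsetP hF _ eF) xe.
have -> : symdiff E1' [set e in F | x \notin e] = [set e in symdiff E F | x \notin e].
  apply/setP => e; rewrite /symdiff /E1' !inE; case: (x \in e); rewrite /= ?andbF ?andbT //.
exact: remB.
Qed.

Lemma edit2 F : edit_set U1 E1' sigma n.-1 F -> edit_set U E sigma n F.
Proof.
case=> hF h; split.
  by apply/subsetP => e /(subsetP hF); exact: pairs1.
have -> : symdiff E F = symdiff E1' F :|: X.
  apply/setP => e; rewrite !inE memX.
  case: (boolP (x \in e)) => xe; rewrite ?andbT ?andbF /= ?orbF //.
  have -> : e \in F = false.
    by apply/negP => /(subsetP hF); rewrite inE => /andP [/subsetP /(_ x xe)]; rewrite in_setD1 eqxx.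
  by case: (e \in E).
apply: addA => //.
apply/subsetP => e; rewrite /symdiff inE => /orP []; rewrite in_setD => /andP [h1 h2].
  by move: h2; rewrite inE => /andP [eE xe]; exact: pairs2 (subsetP wfE _ eE) xe.
exact: (subsetP hF _ h2).
Qed.

End Main.

Lemma filt_eq (V : finType) (x : V) (F : {set {set V}}) :
  (forall e, e \in F -> x \notin e) -> [set e in F | x \notin e] = F.
Proof.
move=> h; apply/setP => e; rewrite inE; case eF: (e \in F) => //=; exact: h.
Qed.

Lemma filt_lt (V : finType) (x : V) (F : {set {set V}}) e :
  e \in F -> x \in e -> #|[set e in F | x \notin e]| < #|F|.
Proof.
move=> eF xe; apply: proper_card; apply/properP; split.
  by apply/subsetP => e'; rewrite inE => /andP [].
by exists e => //; rewrite inE xe andbF.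
Qed.

Unset Implicit Arguments.

Theorem mainTheorem6 (V S : finType) (U : {set V}) (E : {set {set V}})
  (sigma : V -> S) (n : nat) (x : V) :
  properly_colored U E sigma n -> hub U E x ->
  forall F : {set {set V}},
    (optimal_deletion_set U E sigma n F <->
     optimal_deletion_set (del_vertex U E x).1 (del_vertex U E x).2 sigma n.-1 F) /\
    (optimal_edit_set U E sigma n F <->
     optimal_edit_set (del_vertex U E x).1 (del_vertex U E x).2 sigma n.-1 F).
Proof.
move=> pc hb F.
have -> : (del_vertex U E x).1 = U1 U x by [].
have -> : (del_vertex U E x).2 = E1' E x by [].
split; split.
- case=> hD hopt.
  have hx : forall e, e \in F -> x \notin e.
    move=> e eF; apply/negP => xe.
    have h2 := del2 pc hb (del1 pc hb hD); have := hopt _ h2.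
    by rewrite leqNgt (filt_lt eF xe).
  rewrite -(filt_eq hx); have h1 := del1 pc hb hD; split => //.
  move=> F' h'; rewrite (filt_eq hx); have h2 := del2 pc hb h'; exact: hopt.
- case=> hD hopt; have h1 := del2 pc hb hD; split => //.
  move=> F' h'; have h2 := del1 pc hb h'; apply: leq_trans (hopt _ h2) _.
  by apply: subset_leq_card; apply/subsetP => e; rewrite inE => /andP [].
- case=> hD hopt.
  have hx : forall e, e \in F -> x \notin e.
    move=> e eF; apply/negP => xe.
    have h2 := edit2 pc hb (edit1 pc hb hD); have := hopt _ h2.
    by rewrite leqNgt (filt_lt eF xe).
  rewrite -(filt_eq hx); have h1 := edit1 pc hb hD; split => //.
  move=> F' h'; rewrite (filt_eq hx); have h2 := edit2 pc hb h'; exact: hopt.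
- case=> hD hopt; have h1 := edit2 pc hb hD; split => //.
  move=> F' h'; have h2 := edit1 pc hb h'; apply: leq_trans (hopt _ h2) _.
  by apply: subset_leq_card; apply/subsetP => e; rewrite inE => /andP [].
Qed.
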